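(* Let $P(X)=\sum_{i=0}^d a_iX^i$ be a polynomial with coefficients $a_i$ in $\mathbb{D}$, and let $A,B\in\mathbb{D}$ with $P(A)=P(B)$. Then $A=B$ provided either $a_1\in\mathbb{D}^*$, or there exists $i>1$ with $a_i\in\mathbb{D}^*$ and $A\in\mathbb{D}^*$.
   Context: $\mathbb{D}$ is the set of finite dynamical systems (FDSs), i.e. functions $A:S_A\to S_A$ on finite sets, considered up to isomorphism of functional graphs. The sum $A+B$ acts on the disjoint union $S_A\sqcup S_B$ as $A$ on $S_A$ and $B$ on $S_B$; the product $AB$ acts on $S_A\times S_B$ by $(a,b)\mapsto(A(a),B(b))$. $X^i$ denotes the $i$-fold product, $X^0$ is the one-state FDS with a fixpoint, and $P(A)=\sum_i a_iA^i$ is evaluated with these operations. $\mathbb{D}^*$ is the set of FDSs having a fixpoint (a state $s$ with $A(s)=s$). *)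

(* Defs.v *)
From mathcomp Require Import all_boot.
Set Implicit Arguments. Unset Strict Implicit. Unset Printing Implicit Defensive.

Record FDS : Type := mkFDS { carrier : finType; dyn : carrier -> carrier }.
Arguments dyn : clear implicits.

Definition fds_iso (A B : FDS) : Prop :=
  exists h : carrier A -> carrier B,
    bijective h /\ forall x, h (dyn A x) = dyn B (h x).

(* The FDS has a fixpoint (membership in D^* ). *)
Definition has_fixpoint (A : FDS) : Prop := exists s, dyn A s = s.

Definition fds0 : FDS := @mkFDS void id.
Definition fds1 : FDS := @mkFDS unit id.

Definition fds_add (A B : FDS) : FDS :=
  @mkFDS (carrier A + carrier B)%type
    (fun s => match s with inl a => inl (dyn A a) | inr b => inr (dyn B b) end).

Definition fds_mul (A B : FDS) : FDS :=
  @mkFDS (carrier A * carrier B)%type (fun s => (dyn A s.1, dyn B s.2)).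

Fixpoint fds_pow (A : FDS) (n : nat) : FDS :=
  match n with 0 => fds1 | n'.+1 => fds_mul A (fds_pow A n') end.

Fixpoint poly_eval_from (a : seq FDS) (A : FDS) (k : nat) : FDS :=
  match a with
  | [::] => fds0
  | c :: a' => fds_add (fds_mul c (fds_pow A k)) (poly_eval_from a' A k.+1)
  end.

Definition poly_eval (a : seq FDS) (A : FDS) : FDS := poly_eval_from a A 0.

(* Main.v *)
Require Import Defs.
From mathcomp Require Import all_boot zify.
Set Implicit Arguments. Unset Strict Implicit. Unset Printing Implicit Defensive.

Definition homb (C X : FDS) (h : {ffun carrier C -> carrier X}) : bool :=
  [forall x, h (dyn C x) == dyn X (h x)].
Definition homc (C X : FDS) : nat := #|[set h : {ffun carrier C -> carrier X} | homb h]|.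

Lemma homb_P (C X : FDS) (h : {ffun carrier C -> carrier X}) :
  reflect (forall x, h (dyn C x) = dyn X (h x)) (homb h).
Proof. by apply: (iffP forallP) => H x; apply/eqP/H. Qed.

Lemma homc_le (C X Y : FDS) (k : carrier X -> carrier Y) : injective k ->
  (forall x, k (dyn X x) = dyn Y (k x)) -> homc C X <= homc C Y.
Proof.
move=> kinj kc; rewrite /homc.
pose m (h : {ffun carrier C -> carrier X}) : {ffun carrier C -> carrier Y} := [ffun x => k (h x)].
have minj : injective m.
  move=> h1 h2 /ffunP E; apply/ffunP => x; apply: kinj; have := E x; by rewrite !ffunE.
rewrite -(card_imset _ minj); apply: subset_leq_card; apply/subsetP => _ /imsetP [h + ->].
rewrite !inE => /homb_P Hh; apply/homb_P => x; by rewrite !ffunE Hh kc.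
Qed.

Lemma homc_iso C X Y : fds_iso X Y -> homc C X = homc C Y.
Proof.
case=> k [[k' kK k'K] kc]; apply/eqP; rewrite eqn_leq (homc_le C (can_inj kK) kc) /=.
apply: (homc_le C (can_inj k'K)) => y; apply: (can_inj kK); by rewrite kc !k'K.
Qed.

Lemma homc_mul C X Y : homc C (fds_mul X Y) = homc C X * homc C Y.
Proof.
rewrite /homc -cardsX.
pose m (h : {ffun carrier C -> carrier (fds_mul X Y)}) :
  {ffun carrier C -> carrier X} * {ffun carrier C -> carrier Y} :=
  ([ffun x => (h x).1], [ffun x => (h x).2]).
have minj : injective m.
  move=> h1 h2 [/ffunP E1 /ffunP E2]; apply/ffunP => x.
  have := E1 x; have := E2 x; rewrite !ffunE.
  by case: (h1 x) => ? ?; case: (h2 x) => ? ? /= -> ->.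
rewrite -(card_imset _ minj); apply: eq_card => -[g1 g2]. rewrite !inE /=.
apply/imsetP/andP.
  case=> h; rewrite inE => /homb_P Hh [-> ->]; split; apply/homb_P => x;
  by rewrite !ffunE Hh.
case=> /homb_P H1 /homb_P H2; exists [ffun x => (g1 x, g2 x)].
  rewrite inE; apply/homb_P => x; by rewrite !ffunE H1 H2.
by rewrite /m; congr pair; apply/ffunP => x; rewrite !ffunE.
Qed.

Lemma homc_1 C : homc C fds1 = 1.
Proof.
rewrite /homc (_ : [set h | _] = setT); last first.
  by apply/setP => h; rewrite !inE; apply/homb_P => x; case: (h _); case: (dyn _ _).
by rewrite cardsT card_ffun card_unit exp1n.
Qed.

Lemma homc_0 C (x0 : carrier C) : homc C fds0 = 0.
Proof.
apply/eqP; rewrite cards_eq0; apply/eqP/setP => h; by case: (h x0).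
Qed.

Lemma homc_pow C X n : homc C (fds_pow X n) = homc C X ^ n.
Proof. elim: n => [|n IH] /=; first by rewrite homc_1. by rewrite homc_mul IH expnS. Qed.


Definition closedb (C : FDS) (S : {set carrier C}) :=
  [forall x, (x \in S) == (dyn C x \in S)].
Definition conn (C : FDS) :=
  [forall S : {set carrier C}, closedb S ==> (S == set0) || (S == setT)].

Definition isl (T1 T2 : Type) (s : T1 + T2) := if s is inl _ then true else false.
Definition getl (T1 T2 : Type) (d : T1) (s : T1 + T2) := if s is inl a then a else d.
Definition getr (T1 T2 : Type) (d : T2) (s : T1 + T2) := if s is inr a then a else d.

Lemma homc_add C X Y (x0 : carrier C) : conn C ->
  homc C (fds_add X Y) = homc C X + homc C Y.
Proof.
move=> cC.
pose mL (g : {ffun carrier C -> carrier X}) : {ffun carrier C -> carrier (fds_add X Y)} :=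
  [ffun x => inl (g x)].
pose mR (g : {ffun carrier C -> carrier Y}) : {ffun carrier C -> carrier (fds_add X Y)} :=
  [ffun x => inr (g x)].
have injL : injective mL.
  move=> g1 g2 /ffunP E; apply/ffunP => x; have := E x; rewrite !ffunE; by case.
have injR : injective mR.
  move=> g1 g2 /ffunP E; apply/ffunP => x; have := E x; rewrite !ffunE; by case.
have E : [set h | homb h] = mL @: [set g | homb g] :|: mR @: [set g | homb g].
  apply/setP => h; rewrite !inE; apply/idP/idP; last first.
    case/orP => /imsetP [g + ->]; rewrite inE => /homb_P Hg; apply/homb_P => x;
    by rewrite !ffunE Hg.
  move=> /homb_P Hh.
  pose S := [set x | isl (h x)].
  have Hcl : closedb S.
    by apply/forallP => x; rewrite !inE Hh; case: (h x).
  have := forallP cC S; rewrite Hcl /= => /orP [/eqP S0 | /eqP ST].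
    have nS x : ~~ isl (h x) by have := in_set0 x; rewrite -S0 inE => ->.
    case E0: (h x0) => [a0|b0]; first by have := nS x0; rewrite E0.
    have hx x : h x = inr (getr b0 (h x)) by have := nS x; case: (h x).
    apply/orP; right; apply/imsetP; exists [ffun x => getr b0 (h x)].
      by rewrite inE; apply/homb_P => x; rewrite !ffunE Hh (hx x).
    by apply/ffunP => x; rewrite !ffunE -hx.
  have pS x : isl (h x) by have := in_setT x; rewrite -ST inE.
  case E0: (h x0) => [a0|b0]; last by have := pS x0; rewrite E0.
  have hx x : h x = inl (getl a0 (h x)) by have := pS x; case: (h x).
  apply/orP; left; apply/imsetP; exists [ffun x => getl a0 (h x)].
    by rewrite inE; apply/homb_P => x; rewrite !ffunE Hh (hx x).
  by apply/ffunP => x; rewrite !ffunE -hx.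
rewrite /homc E cardsU (card_imset _ injL) (card_imset _ injR).
have -> : mL @: [set g | homb g] :&: mR @: [set g | homb g] = set0.
  apply/setP => h; rewrite !inE; apply/negbTE/andP => -[/imsetP [g1 _ ->] /imsetP [g2 _ /ffunP/(_ x0)]].
  by rewrite !ffunE.
by rewrite cards0 subn0.
Qed.


Fixpoint pev (cs : seq nat) (x k : nat) : nat :=
  match cs with [::] => 0 | c :: cs' => c * x ^ k + pev cs' x k.+1 end.

Lemma homc_poly C a A k (x0 : carrier C) : conn C ->
  homc C (poly_eval_from a A k) = pev (map (homc C) a) (homc C A) k.
Proof.
move=> cC; elim: a k => [|c a IH] k /=; first exact: homc_0.
by rewrite (homc_add _ _ x0) // homc_mul homc_pow IH.
Qed.

Lemma exp_mono x y e : x <= y -> x ^ e <= y ^ e.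
Proof. by case: e => [|e] //= H; rewrite leq_exp2r. Qed.

Lemma pev_mono cs x y k : x <= y -> pev cs x k <= pev cs y k.
Proof.
move=> H; elim: cs k => //= c cs IH k.
by rewrite leq_add // ?IH // leq_mul // exp_mono.
Qed.

Lemma pev_strict cs x y k : x < y -> (exists j, 0 < k + j /\ 0 < nth 0 cs j) ->
  pev cs x k < pev cs y k.
Proof.
move=> H; elim: cs k => [|c cs IH] k /=; first by case=> -[|j] []; rewrite nth_nil.
case=> -[|j] /= [Hk Hc].
  rewrite addn0 in Hk.
  apply: (@leq_trans (c * y ^ k + pev cs x k.+1)).
    by rewrite ltn_add2r ltn_pmul2l // ltn_exp2r.
  by rewrite leq_add2l pev_mono // ltnW.
apply: (@leq_trans (c * x ^ k + pev cs y k.+1)).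
  by rewrite ltn_add2l IH //; exists j; split.
by rewrite leq_add2r leq_mul // exp_mono // ltnW.
Qed.

Lemma pev_inj cs x y k : pev cs x k = pev cs y k ->
  (exists j, 0 < k + j /\ 0 < nth 0 cs j) -> x = y.
Proof.
move=> E J; case: (ltngtP x y) => // H.
  by have := pev_strict H J; rewrite E ltnn.
by have := pev_strict H J; rewrite E ltnn.
Qed.

Lemma homc_fix C X : has_fixpoint X -> 0 < homc C X.
Proof.
case=> s Hs; apply/card_gt0P; exists [ffun _ => s].
by rewrite inE; apply/homb_P => x; rewrite !ffunE Hs.
Qed.

Lemma conn_eq a A B C (x0 : carrier C) : conn C ->
  fds_iso (poly_eval a A) (poly_eval a B) ->
  (exists i, 0 < i /\ has_fixpoint (nth fds0 a i)) -> homc C A = homc C B.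
Proof.
move=> cC iso [i [i0 fx]].
have := homc_iso C iso; rewrite /poly_eval !(homc_poly _ _ _ x0) //.
move/pev_inj; apply; exists i; split => //.
case: (ltnP i (size a)) => Hi.
  by rewrite (nth_map fds0) // homc_fix.
by move: fx; rewrite nth_default // => -[[]].
Qed.

Definition subfds (C : FDS) (P : pred (carrier C)) (g : carrier C -> carrier C) : FDS :=
  @mkFDS {x : carrier C | P x} (fun s => insubd s (g (val s))).


Definition glue (T : Type) (P : pred T) (Z : Type) (g1 : {x | P x} -> Z)
  (g2 : {x | ~~ P x} -> Z) (x : T) : Z :=
  (if P x as b return P x = b -> Z then fun e => g1 (exist _ x e)
   else fun e => g2 (exist _ x (negbT e))) (erefl (P x)).

Lemma glue1 (T : Type) (P : pred T) (Z : Type) g1 g2 (s : {x | P x}) :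
  @glue T P Z g1 g2 (val s) = g1 s.
Proof.
case: s => x p /=; rewrite /glue; move: (erefl (P x)).
case: {2 3}(P x) => e; first by congr g1; apply: val_inj.
exfalso; by rewrite p in e.
Qed.

Lemma glue2 (T : Type) (P : pred T) (Z : Type) g1 g2 (s : {x | ~~ P x}) :
  @glue T P Z g1 g2 (val s) = g2 s.
Proof.
case: s => x p /=; rewrite /glue; move: (erefl (P x)).
case: {2 3}(P x) => e; last by congr g2; apply: val_inj.
exfalso; by rewrite e in p.
Qed.

Lemma val_dynsub C P g (s : carrier (@subfds C P g)) : P (g (val s)) ->
  val (dyn (subfds P g) s) = g (val s).
Proof. move=> H; exact: insubdK. Qed.

Lemma homc_split C X (P : pred (carrier C)) : (forall x, P (dyn C x) = P x) ->
  homc C X = homc (subfds P (dyn C)) X * homc (subfds (fun x => ~~ P x) (dyn C)) X.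
Proof.
move=> Pcl; rewrite /homc -cardsX.
pose m (h : {ffun carrier C -> carrier X}) :
  {ffun carrier (subfds P (dyn C)) -> carrier X} *
  {ffun carrier (subfds (fun x => ~~ P x) (dyn C)) -> carrier X} :=
  ([ffun s => h (val s)], [ffun s => h (val s)]).
have minj : injective m.
  move=> h1 h2 [/ffunP E1 /ffunP E2]; apply/ffunP => x.
  case: (boolP (P x)) => p.
    by have := E1 (exist _ x p); rewrite !ffunE.
  by have := E2 (exist _ x p); rewrite !ffunE.
rewrite -(card_imset _ minj); apply: eq_card => -[g1 g2]; rewrite !inE /=.
apply/imsetP/andP.
  case=> h; rewrite inE => /homb_P Hh [-> ->]; split; apply/homb_P => s;
  by rewrite !ffunE val_dynsub ?Hh // Pcl; case: s.
case=> /homb_P H1 /homb_P H2; exists [ffun x => glue g1 g2 x].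
  rewrite inE; apply/homb_P => x; rewrite !ffunE.
  case: (boolP (P x)) => p.
    have -> : dyn C x = val (dyn (subfds P (dyn C)) (exist _ x p)).
      by rewrite val_dynsub //= Pcl.
    by rewrite glue1 H1 -(glue1 g1 g2 (exist _ x p)).
  have -> : dyn C x = val (dyn (subfds (fun x => ~~ P x) (dyn C)) (exist _ x p)).
    by rewrite val_dynsub //= Pcl.
  by rewrite glue2 H2 -(glue2 g1 g2 (exist _ x p)).
by rewrite /m; congr pair; apply/ffunP => s; rewrite !ffunE ?glue1 ?glue2.
Qed.


Lemma homc_empty C X : #|carrier C| = 0 -> homc C X = 1.
Proof.
move=> E; rewrite /homc (_ : [set h | _] = setT); last first.
  apply/setP => h; rewrite !inE; apply/homb_P => x.
  by have := card0_eq E x.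
by rewrite cardsT card_ffun E.
Qed.

Lemma card_subfds C (S : {set carrier C}) g :
  #|carrier (subfds (fun x => x \in S) g)| = #|S|.
Proof. by rewrite card_sig; apply: eq_card => x; rewrite inE. Qed.

Lemma card_subfdsC C (S : {set carrier C}) g :
  #|carrier (subfds (fun x => ~~ (x \in S)) g)| = #|~: S|.
Proof. by rewrite card_sig; apply: eq_card => x; rewrite !inE. Qed.

Lemma homc_all A B :
  (forall C, 0 < #|carrier C| -> conn C -> homc C A = homc C B) ->
  forall n C, #|carrier C| <= n -> homc C A = homc C B.
Proof.
move=> H; elim=> [|n IH] C Hc.
  by rewrite !homc_empty //; apply/eqP; rewrite -leqn0.
case: (posnP #|carrier C|) => [E|pos]; first by rewrite !homc_empty.
case cC: (conn C); first exact: H.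
move/negbT: cC; move/forallPn => [S]; rewrite negb_imply negb_or => /andP [Hcl /andP [nS0 nST]].
have Pcl : forall x, (dyn C x \in S) = (x \in S).
  by move=> x; have /eqP := forallP Hcl x.
rewrite !(homc_split _ Pcl) !IH //.
- rewrite card_subfdsC -ltnS; apply: leq_trans Hc.
  rewrite -(cardsT (carrier C)); apply: proper_card; rewrite properT.
  apply/negP => /eqP E; move: nS0; by rewrite -(setCK S) E setCT eqxx.
- rewrite card_subfds -ltnS; apply: leq_trans Hc.
  by rewrite -(cardsT (carrier C)); apply: proper_card; rewrite properT.
Qed.


Definition kr (T : finType) (Z : eqType) (h : T -> Z) (x : T) : T :=
  nth x (enum T) (find (fun y => h y == h x) (enum T)).

Lemma kr_has (T : finType) (Z : eqType) (h : T -> Z) x :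
  has (fun y => h y == h x) (enum T).
Proof. by apply/hasP; exists x; rewrite ?mem_enum. Qed.

Lemma kr_spec (T : finType) (Z : eqType) (h : T -> Z) x : h (kr h x) = h x.
Proof. by apply/eqP; exact: (nth_find x (kr_has h x)). Qed.

Lemma kr_eq (T : finType) (Z : eqType) (h : T -> Z) x y : h x = h y -> kr h x = kr h y.
Proof.
move=> E; rewrite /kr E; apply: set_nth_default; rewrite -has_find; exact: kr_has.
Qed.

Lemma kr_inj (T : finType) (Z : eqType) (h : T -> Z) x y : kr h x = kr h y -> h x = h y.
Proof. by move=> E; rewrite -kr_spec E kr_spec. Qed.

Lemma kr_ext (T : finType) (Z1 Z2 : eqType) (h1 : T -> Z1) (h2 : T -> Z2) :
  (forall x y, (h1 x == h1 y) = (h2 x == h2 y)) -> forall x, kr h1 x = kr h2 x.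
Proof.
move=> H x; rewrite /kr; congr nth; apply: eq_find => y; exact: H.
Qed.

Definition injc (C X : FDS) : nat :=
  #|[set h : {ffun carrier C -> carrier X} | homb h && injectiveb h]|.

Definition krf (C X : FDS) (h : {ffun carrier C -> carrier X}) : {ffun carrier C -> carrier C} :=
  [ffun x => kr h x].

Definition goodb (C : FDS) (r : {ffun carrier C -> carrier C}) : bool :=
  [&& [forall x, r (r x) == r x], [forall x, kr r x == r x] &
      [forall x, r (dyn C (r x)) == r (dyn C x)]].

Definition Qf (C : FDS) (r : {ffun carrier C -> carrier C}) : FDS :=
  subfds (fun x => r x == x) (fun x => r (dyn C x)).

Definition cnt (C X : FDS) (r : {ffun carrier C -> carrier C}) : nat :=
  #|[set h : {ffun carrier C -> carrier X} | homb h && (krf h == r)]|.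

Lemma krf_good C X (h : {ffun carrier C -> carrier X}) : homb h -> goodb (krf h).
Proof.
move=> /homb_P Hh; apply/and3P; split; apply/forallP => x; rewrite !ffunE.
- by apply/eqP/kr_eq; rewrite kr_spec.
- apply/eqP; rewrite (@kr_ext _ _ _ _ h) ?ffunE // => y z; rewrite !ffunE.
  by apply/eqP/eqP; [apply: kr_inj | apply: kr_eq].
- by apply/eqP/kr_eq; rewrite !Hh kr_spec.
Qed.

Lemma cnt_bad C X r : ~~ goodb r -> @cnt C X r = 0.
Proof.
move=> nb; apply/eqP; rewrite cards_eq0; apply/eqP/setP => h; rewrite !inE.
apply/negP => /andP [hh /eqP E]; move: nb; by rewrite -E krf_good.
Qed.


Lemma cnt_good C X r : goodb r -> @cnt C X r = injc (Qf r) X.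
Proof.
case/and3P => /forallP G1 /forallP G2 /forallP G3.
pose qp (x : carrier C) : carrier (Qf r) := exist _ (r x) (G1 x).
have qpK (q : carrier (Qf r)) : qp (val q) = q.
  by apply: val_inj => /=; apply/eqP; case: q.
have vdyn (q : carrier (Qf r)) : val (dyn (Qf r) q) = r (dyn C (val q)).
  by rewrite val_dynsub //=; apply: G1.
pose phi (g : {ffun carrier (Qf r) -> carrier X}) : {ffun carrier C -> carrier X} :=
  [ffun x => g (qp x)].
have phiinj : injective phi.
  move=> g1 g2 /ffunP E; apply/ffunP => q; have := E (val q); by rewrite !ffunE qpK.
rewrite /cnt /injc -(card_imset _ phiinj); apply: eq_card => h; rewrite !inE.
apply/andP/imsetP.
  case=> /homb_P Hh /eqP Er.
  have rE x : r x = kr h x by rewrite -Er ffunE.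
  exists [ffun q => h (val q)].
    rewrite inE; apply/andP; split.
      apply/homb_P => q; by rewrite !ffunE vdyn rE kr_spec Hh.
    apply/injectiveP => q1 q2; rewrite !ffunE => E; apply: val_inj.
    by rewrite -(eqP (valP q1)) -(eqP (valP q2)) !rE (kr_eq E).
  by apply/ffunP => x; rewrite !ffunE /= rE kr_spec.
case=> g; rewrite inE => /andP [/homb_P Hg /injectiveP ig] ->; split.
  apply/homb_P => x; rewrite !ffunE -Hg; apply: f_equal; apply: val_inj.
  by rewrite vdyn /=; apply/esym/eqP/G3.
apply/eqP/ffunP => x; rewrite !ffunE.
rewrite (@kr_ext _ _ _ _ r); first exact/eqP/G2.
move=> y z; rewrite !ffunE (inj_eq ig).
by apply/eqP/eqP => [E|E]; [have := congr1 val E | apply: val_inj].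
Qed.

Lemma cnt_id C X : @cnt C X [ffun x => x] = injc C X.
Proof.
apply: eq_card => h; rewrite !inE; congr andb; apply/eqP/injectiveP.
  move=> /ffunP E x y Exy; have := E x; have := E y; rewrite !ffunE => <- <-.
  exact: kr_eq.
move=> ih; apply/ffunP => x; rewrite !ffunE; apply: ih; exact: kr_spec.
Qed.

Lemma homc_decomp C X : homc C X =
  injc C X + \sum_(r : {ffun carrier C -> carrier C} | r != [ffun x => x]) (if goodb r then injc (Qf r) X else 0).
Proof.
have -> : homc C X = \sum_r @cnt C X r.
  rewrite /homc -sum1_card (partition_big (@krf C X) predT) //=.
  apply: eq_bigr => r _; rewrite /cnt -sum1_card; apply: eq_bigl => h; by rewrite !inE.
rewrite (bigD1 [ffun x => x]) //= cnt_id; congr addn; apply: eq_bigr => r _.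
case: (boolP (goodb r)) => g; [exact: cnt_good | exact: cnt_bad].
Qed.

Lemma card_Qf C r : r != [ffun x => x] -> #|carrier (@Qf C r)| < #|carrier C|.
Proof.
move=> nr; have [x rx] : exists x, r x != x.
  apply/existsP; move: nr; apply: contraR; rewrite negb_exists => /forallP H.
  by apply/eqP/ffunP => x; rewrite ffunE; apply/eqP; have := H x; rewrite negbK.
rewrite /Qf /= card_sig.
have := cardC [pred x | r x == x].
have : 0 < #|[predC [pred x | r x == x]]| by apply/card_gt0P; exists x; rewrite !inE.
move=> h1 <-; rewrite -[X in X < _]addn0 ltn_add2l; exact: h1.
Qed.

Lemma inj_all A B : (forall C, homc C A = homc C B) ->
  forall n C, #|carrier C| < n -> injc C A = injc C B.
Proof.
move=> H; elim=> // n IH C Hc.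
have := H C; rewrite !homc_decomp.
have -> : \sum_(r : {ffun carrier C -> carrier C} | r != [ffun x => x]) (if goodb r then injc (Qf r) A else 0) =
          \sum_(r : {ffun carrier C -> carrier C} | r != [ffun x => x]) (if goodb r then injc (Qf r) B else 0).
  apply: eq_bigr => r nr; case: (goodb r) => //; apply: IH.
  exact: leq_trans (card_Qf nr) Hc.
by move/addIn.
Qed.


Lemma injc_self X : 0 < injc X X.
Proof.
apply/card_gt0P; exists [ffun x => x]; rewrite inE; apply/andP; split.
  by apply/homb_P => x; rewrite !ffunE.
by apply/injectiveP => x y; rewrite !ffunE.
Qed.

Lemma injc_card X Y : 0 < injc X Y -> #|carrier X| <= #|carrier Y|.
Proof.
case/card_gt0P => h; rewrite inE => /andP [_ /injectiveP ih]; exact: leq_card ih.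
Qed.

Theorem mainTheorem6 (a : seq FDS) (A B : FDS) :
  fds_iso (poly_eval a A) (poly_eval a B) ->
  (has_fixpoint (nth fds0 a 1) \/
   (exists i, 1 < i < size a /\ has_fixpoint (nth fds0 a i) /\ has_fixpoint A)) ->
  fds_iso A B.
Proof.
move=> iso hyp.
have Hi : exists i, 0 < i /\ has_fixpoint (nth fds0 a i).
  case: hyp => [h|[i [/andP [i1 _] [h _]]]]; first by exists 1.
  by exists i; split => //; apply: ltnW.
have Hc : forall C, 0 < #|carrier C| -> conn C -> homc C A = homc C B.
  move=> C /card_gt0P [x0 _] cC; exact: (conn_eq x0 cC iso Hi).
have Hall : forall C, homc C A = homc C B.
  move=> C; exact: (homc_all Hc (leqnn _)).
have Hinj : forall C, injc C A = injc C B.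
  move=> C; exact: (inj_all Hall (ltnSn _)).
have hAB : 0 < injc A B by rewrite -Hinj injc_self.
have hBA : 0 < injc B A by rewrite Hinj injc_self.
have cBA := injc_card hBA.
case/card_gt0P: hAB => h; rewrite inE => /andP [/homb_P Hh /injectiveP ih].
exists h; split => //; exact: inj_card_bij ih cBA.
Qed.
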